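(* In the setting described in the context, for each $i=2,\dots,h-1$, writing $\min D_i=a_i x^{\nu_{i,0}}\bar f_1^{\nu_{i,1}}\cdots\bar f_{i-1}^{\nu_{i,i-1}}$ with $a_i\in k^*$, $\nu_{i,0}\ge 0$ and $0\le \nu_{i,j}<p^{n_j}$ for $j\ge1$, the lower jumps satisfy $$b_i=\nu_{i,0}\,p^{n_1+\cdots+n_{i-1}}+\sum_{j=1}^{i-1}\nu_{i,j}\,p^{n_{j+1}+\cdots+n_{i-1}}\,b_j .$$
   Context: Let $k$ be an algebraically closed field of characteristic $p\ge 5$. Let $\pi:X\to\mathbb{P}^1$ be a Galois cover of curves over $k$ with function field $F\supset k(x)$ and Galois group $G$, such that the only ramified point of $\mathbb{P}^1$ is $P_\infty$ (the pole of $x$), which is totally and wildly ramified, and $G$ is a $p$-group equal to its first ramification group. Let $P$ be the unique point of $X$ over $P_\infty$ and $v$ the valuation of $F$ at $P$; thus $v(x)=-|G|$. Let $b_1<\dots<b_{h-1}$ be the jumps of the lower ramification filtration $G_i=\{\sigma: v(\sigma(t)-t)\ge i+1\}$ ($t$ a uniformizer at $P$), with $G_{b_h}=1$ and $[G_{b_i}:G_{b_{i+1}}]=p^{n_i}$, so $|G|=p^{n_1+\cdots+n_{h-1}}$. Let $F_i=F^{G_{b_i}}$, $F_1=k(x)$. There are $\bar f_i\in F_{i+1}$ with $F_{i+1}=F_i(\bar f_i)$, only pole at $P$, $v(\bar f_i)=-\bar m_i$ with $\bar m_i=p^{n_{i+1}+\cdots+n_{h-1}}b_i$, and minimal polynomial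 over $F_i$ equal to $X^{p^{n_i}}+a^{(i)}_{n_i-1}X^{p^{n_i-1}}+\cdots+a^{(i)}_0X-D_i$ with $a^{(i)}_j\in k$, $D_i\in F_i$. Each $D_i$ is a finite sum $\sum\gamma x^{\ell_0}\bar f_1^{\ell_1}\cdots\bar f_{i-1}^{\ell_{i-1}}$ ($\gamma\in k$, $\ell_0\ge0$, $0\le\ell_j<p^{n_j}$) in which distinct monomials have distinct valuations; $\min D_i$ is the summand of smallest valuation, so $v(\min D_i)=v(D_i)$. *)

(* Defs.v *)
From HB Require Import structures.
From mathcomp Require Import all_boot all_order all_algebra all_fingroup.
From mathcomp Require Import pgroup.
Set Implicit Arguments. Unset Strict Implicit. Unset Printing Implicit Defensive.
Import Order.TTheory GRing.Theory Num.Theory.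
Local Open Scope ring_scope.

(* A place of F/k: a normalized discrete valuation of F (values on nonzero
   elements only; the value at 0 is irrelevant) which is trivial on k,
   where k is embedded in F by iota. *)
Definition is_place (k F : fieldType) (iota : {rmorphism k -> F}) (w : F -> int)
  : Prop :=
  [/\ (forall a b : F, a != 0 -> b != 0 -> w (a * b) = w a + w b),
      (forall a b : F, a != 0 -> b != 0 -> a + b != 0 ->
                       Num.min (w a) (w b) <= w (a + b)),
      (exists y : F, y != 0 /\ w y = 1) &
      (forall c : k, c != 0 -> w (iota c) = 0)].

Definition in_kx (k F : fieldType) (iota : {rmorphism k -> F}) (x y : F) : Prop :=
  exists q r : {poly k},
    (map_poly iota r).[x] != 0 /\ y = (map_poly iota q).[x] / (map_poly iota r).[x].

Definition ramgrp (gT : finGroupType) (G : {set gT}) (F : fieldType)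
  (act : gT -> F -> F) (v : F -> int) (t : F) (i : nat) : {set gT} :=
  [set g in G | (act g t == t) || ((i.+1)%:Z <= v (act g t - t))].

Definition Gb (gT : finGroupType) (G : {set gT}) (F : fieldType)
  (act : gT -> F -> F) (v : F -> int) (t : F) (h : nat) (b : nat -> nat)
  (i : nat) : {set gT} :=
  if (i < h)%N then ramgrp G act v t (b i) else [set 1%g].

Definition fixedby (gT : finGroupType) (F : fieldType) (act : gT -> F -> F)
  (H : {set gT}) (y : F) : Prop :=
  forall g, g \in H -> act g y = y.

(* the monomial  gamma * x^{l_0} * fb_1^{l_1} ... fb_{i-1}^{l_{i-1}},
   encoded by tm = (gamma, [:: l_0; ...; l_{i-1}]) *)
Definition monom (k F : fieldType) (iota : {rmorphism k -> F}) (x : F)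
  (fb : nat -> F) (i : nat) (tm : k * seq nat) : F :=
  iota tm.1 * x ^+ (nth 0%N tm.2 0) * \prod_(1 <= j < i) fb j ^+ (nth 0%N tm.2 j).

Definition addpol (k F : fieldType) (iota : {rmorphism k -> F}) (p : nat)
  (n : nat -> nat) (a : nat -> nat -> k) (D : nat -> F) (i : nat) : {poly F} :=
  'X^(p ^ n i) + \sum_(j < n i) (iota (a i j))%:P * 'X^(p ^ j) - (D i)%:P.

(* Main.v *)
Require Import Defs.
From HB Require Import structures.
From mathcomp Require Import all_boot all_order all_algebra all_fingroup.
From mathcomp Require Import pgroup.
From mathcomp Require Import zify ring.
Import Order.TTheory GRing.Theory Num.Theory.
Local Open Scope ring_scope.


Section S.
Lemma v1_lem (F : fieldType) (v : F -> int)
  (hmul : forall a b : F, a != 0 -> b != 0 -> v (a * b) = v a + v b) : v 1 = 0.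
Proof.
have := hmul 1 1 (oner_neq0 _) (oner_neq0 _); rewrite mulr1 => h; lia.
Qed.

Lemma vN_lem (F : fieldType) (v : F -> int)
  (hmul : forall a b : F, a != 0 -> b != 0 -> v (a * b) = v a + v b) y :
  y != 0 -> v (- y) = v y.
Proof.
move=> yn.
have m1: (-1 : F) != 0 by rewrite oppr_eq0 oner_neq0.
have := hmul _ _ m1 m1; rewrite mulrNN mulr1 (@v1_lem _ _ hmul) => h.
have h2 : v (-1) = 0 by lia.
by rewrite -mulN1r hmul // h2 add0r.
Qed.

Lemma vX_lem (F : fieldType) (v : F -> int)
  (hmul : forall a b : F, a != 0 -> b != 0 -> v (a * b) = v a + v b) y n :
  y != 0 -> v (y ^+ n) = v y * n%:Z.
Proof.
move=> yn; elim: n => [|n IH]; first by rewrite expr0 (@v1_lem _ _ hmul) mulr0.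
rewrite exprS hmul ?expf_neq0 // IH. lia.
Qed.

Lemma strict_lem (F : fieldType) (v : F -> int)
  (hmul : forall a b : F, a != 0 -> b != 0 -> v (a * b) = v a + v b)
  (hmin : forall a b : F, a != 0 -> b != 0 -> a + b != 0 ->
                       Num.min (v a) (v b) <= v (a + b)) a b :
  a != 0 -> b != 0 -> v a < v b -> a + b != 0 /\ v (a + b) = v a.
Proof.
move=> an bn lt.
have ab : a + b != 0.
  apply/negP => /eqP e; have : a = - b by apply/eqP; rewrite -addr_eq0 e.
  by move=> ea; move: lt; rewrite ea (@vN_lem _ _ hmul) // ltxx.
split=> //.
have h1 := hmin _ _ an bn ab.
have nb : - b != 0 by rewrite oppr_eq0.
have h2 := hmin _ _ ab nb; rewrite addrK (@vN_lem _ _ hmul _ bn) in h2.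
rewrite (min_l (ltW lt)) in h1.
apply/eqP; rewrite eq_le h1 andbT.
move: h2 => /(_ an); rewrite ge_min; case/orP => [//|h].
by move: lt; rewrite ltNge h.
Qed.

Lemma sum_dom (F : fieldType) (v : F -> int)
  (hmul : forall a b : F, a != 0 -> b != 0 -> v (a * b) = v a + v b)
  (hmin : forall a b : F, a != 0 -> b != 0 -> a + b != 0 ->
                       Num.min (v a) (v b) <= v (a + b)) (s : seq F) a :
  a != 0 -> (forall y, y \in s -> y != 0 -> v a < v y) ->
  a + \sum_(y <- s) y != 0 /\ v (a + \sum_(y <- s) y) = v a.
Proof.
move=> an; elim: s => [|y s IH] hs; first by rewrite big_nil addr0.
have [h1 h2] : a + \sum_(y <- s) y != 0 /\ v (a + \sum_(y <- s) y) = v a.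
  by apply: IH => z zs; apply: hs; rewrite inE zs orbT.
rewrite big_cons addrCA addrC.
have [->|yn] := eqVneq y 0; first by rewrite addr0.
have lt : v (a + \sum_(y <- s) y) < v y.
  by rewrite h2; apply: hs; rewrite ?inE ?eqxx.
have [h3 h4] := @strict_lem _ _ hmul hmin _ _ h1 yn lt.
by split => //; rewrite h4 h2.
Qed.

Lemma prod_lem (F : fieldType) (v : F -> int)
  (hmul : forall a b : F, a != 0 -> b != 0 -> v (a * b) = v a + v b)
  (r : seq nat) (G : nat -> F) :
  (forall j, j \in r -> G j != 0) ->
  \prod_(j <- r) G j != 0 /\ v (\prod_(j <- r) G j) = \sum_(j <- r) v (G j).
Proof.
elim: r => [|j r IH] hr; first by rewrite !big_nil (@v1_lem _ _ hmul) oner_neq0.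
have [h1 h2] : \prod_(j <- r) G j != 0 /\ v (\prod_(j <- r) G j) = \sum_(j <- r) v (G j).
  by apply: IH => z zs; apply: hr; rewrite inE zs orbT.
have gj : G j != 0 by apply: hr; rewrite inE eqxx.
by rewrite !big_cons mulf_neq0 // hmul // h2.
Qed.

Lemma Posz_sum (r : seq nat) (f : nat -> nat) :
  Posz (\sum_(j <- r) f j) = \sum_(j <- r) Posz (f j).
Proof. by elim: r => [|j r IH]; rewrite ?big_nil // !big_cons PoszD IH. Qed.

Lemma uniq_map_eq (T U : eqType) (f : T -> U) s x y :
  uniq (map f s) -> x \in s -> y \in s -> f x = f y -> x = y.
Proof.
elim: s => //= z s IH /andP[nz us]; rewrite !inE => /orP[/eqP->|xs] /orP[/eqP->|ys] e //.
- by case/negP: nz; rewrite e map_f.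
- by case/negP: nz; rewrite -e map_f.
- exact: IH.
Qed.
End S.

Theorem mainTheorem2
  (p : nat) (k : closedFieldType) (F : fieldType) (iota : {rmorphism k -> F})
  (x : F) (gT : finGroupType) (G : {group gT}) (act : gT -> F -> F)
  (v : F -> int) (t : F) (h : nat) (b n : nat -> nat) (fb : nat -> F)
  (a : nat -> nat -> k) (D : nat -> F) (terms : nat -> seq (k * seq nat)) :
  (* k algebraically closed of characteristic p >= 5 *)
  (5 <= p)%N -> p \in [pchar k] ->
  (* x transcendental over k *)
  (forall q : {poly k}, q != 0 -> (map_poly iota q).[x] != 0) ->
  (* G acts faithfully on F by field automorphisms, with fixed field k(x) *)
  (forall g, g \in G -> forall y z, act g (y + z) = act g y + act g z) ->
  (forall g, g \in G -> forall y z, act g (y * z) = act g y * act g z) ->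
  (forall g, g \in G -> act g 1 = 1) ->
  (forall y, act 1%g y = y) ->
  (forall g g', g \in G -> g' \in G -> forall y, act (g * g')%g y = act g (act g' y)) ->
  (forall g, g \in G -> (forall y, act g y = y) -> g = 1%g) ->
  (forall y, fixedby act G y <-> in_kx iota x y) ->
  (* G is a p-group *)
  (p.-group G)%g ->
  (* P is a place of F with v(x) = -|G|, the unique place above P_infty *)
  is_place iota v -> v x = - (#|G|%:Z) ->
  (forall w, is_place iota w -> w x < 0 -> forall y, y != 0 -> w y = v y) ->
  (* every place above a finite place of k(x) is unramified *)
  (forall w, is_place iota w -> 0 <= w x ->
     exists y, [/\ in_kx iota x y, y != 0 & w y = 1]) ->
  (* t is a uniformizer at P *)
  t != 0 -> v t = 1 ->
  (* G equals its first ramification group *)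
  ramgrp G act v t 1 = G ->
  (* b_1 < ... < b_{h-1} are exactly the jumps of the lower filtration *)
  (forall i j, (1 <= i)%N -> (i < j)%N -> (j <= h - 1)%N -> (b i < b j)%N) ->
  (forall j, ramgrp G act v t j != ramgrp G act v t j.+1 <->
     exists2 i, (1 <= i <= h - 1)%N & j = b i) ->
  (* [G_{b_i} : G_{b_{i+1}}] = p^{n_i}, with G_{b_h} = 1 *)
  (forall i, (1 <= i <= h - 1)%N ->
     #|Gb G act v t h b i| = (p ^ n i * #|Gb G act v t h b i.+1|)%N) ->
  (* the generators fb_i *)
  (forall i, (1 <= i <= h - 1)%N ->
     [/\ fb i != 0,
         fixedby act (Gb G act v t h b i.+1) (fb i),
         (forall y, fixedby act (Gb G act v t h b i.+1) y <->
            exists cs : seq F, (forall c, c \in cs -> fixedby act (Gb G act v t h b i) c)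
              /\ y = \sum_(j < size cs) cs`_j * fb i ^+ j),
         (forall w, is_place iota w -> (exists y, y != 0 /\ w y != v y) -> 0 <= w (fb i)) &
         v (fb i) = - ((p ^ (\sum_(i.+1 <= j < h) n j) * b i)%N)%:Z]) ->
  (* minimal polynomial of fb_i over F_i *)
  (forall i, (1 <= i <= h - 1)%N ->
     [/\ fixedby act (Gb G act v t h b i) (D i),
         root (addpol iota p n a D i) (fb i) &
         (forall q : {poly F}, q != 0 ->
            (forall j, fixedby act (Gb G act v t h b i) q`_j) ->
            root q (fb i) -> (size (addpol iota p n a D i) <= size q)%N)]) ->
  (* D_i is a sum of monomials in x, fb_1, ..., fb_{i-1} with distinct valuations *)
  (forall i, (1 <= i <= h - 1)%N ->
     [/\ D i = \sum_(tm <- terms i) monom iota x fb i tm,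
         (forall tm, tm \in terms i ->
            [/\ tm.1 != 0, size tm.2 = i &
                forall j, (1 <= j < i)%N -> (nth 0%N tm.2 j < p ^ n j)%N]),
         uniq [seq tm.2 | tm <- terms i] &
         (forall tm1 tm2, tm1 \in terms i -> tm2 \in terms i -> tm1.2 != tm2.2 ->
            v (monom iota x fb i tm1) != v (monom iota x fb i tm2))]) ->
  (* conclusion: for min D_i = a_i x^{nu_0} fb_1^{nu_1} ... fb_{i-1}^{nu_{i-1}} *)
  forall i, (2 <= i <= h - 1)%N ->
  forall (ai : k) (nu : seq nat), (ai, nu) \in terms i ->
  (forall tm, tm \in terms i -> v (monom iota x fb i (ai, nu)) <= v (monom iota x fb i tm)) ->
  b i = (nth 0 nu 0 * p ^ (\sum_(1 <= j < i) n j)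
         + \sum_(1 <= j < i) nth 0 nu j * p ^ (\sum_(j.+1 <= l < i) n l) * b j)%N.

Proof.
move=> p5 pch trans actD actM act1 act1y actc faith fixkx pgrp hv vx vuniq unram tnz vt ram1 bmono jumps idx fbP minP Dterms i /andP[i2 ih] ai nu Hin Hmin.
have [hmul hmin _ hk] := hv.
have h1i : (1 <= i <= h - 1)%N by rewrite ih andbT; lia.
have [HD Hterm Huniq Hdist] := Dterms i h1i.
have [fbnz _ _ _ vfb] := fbP i h1i.
have [_ Hroot _] := minP i h1i.
have Gbc : forall d, (d <= h - 1)%N -> #|Gb G act v t h b (h - d)| = (p ^ (\sum_(h - d <= j < h) n j))%N.
  elim => [|d IH] hd.
    by rewrite subn0 /Gb ltnn cards1 big_geq // expn0.
  have hm : (1 <= h - d.+1 <= h - 1)%N by apply/andP; split; lia.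
  have e : ((h - d.+1).+1 = h - d)%N by lia.
  rewrite (idx _ hm) e IH; last lia.
  rewrite (big_ltn (m:=(h - d.+1)%N)); last lia.
  by rewrite e expnD.
have rsub : forall j, ramgrp G act v t j \subset G.
  by move=> j; apply/subsetP=> g; rewrite inE => /andP[].
have rmono : forall j, ramgrp G act v t j.+1 \subset ramgrp G act v t j.
  move=> j; apply/subsetP => g; rewrite !inE => /andP[-> /orP[->//|hh]].
  by rewrite orbC; apply/orP; left; lia.
have rb1 : ramgrp G act v t (b 1) = G.
  case: (posnP (b 1)) => hb.
    by rewrite hb; apply/eqP; rewrite eqEsubset rsub /= -{1}ram1 rmono.
  suff : forall j, (1 <= j <= b 1)%N -> ramgrp G act v t j = G.
    by apply; rewrite hb leqnn.
  elim => [//|j IH] /andP[_ hj].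
  case: (posnP j) => j0; first by rewrite j0.
  have nj : ~ (ramgrp G act v t j != ramgrp G act v t j.+1).
    move/(proj1 (jumps j)) => [i' hi' ej].
    case: (ltngtP i' 1) => c; first lia.
      have := bmono 1%N i' (leqnn 1) c (proj2 (andP hi')); lia.
    by move: hj; rewrite ej c ltnn.
  case: (eqVneq (ramgrp G act v t j) (ramgrp G act v t j.+1)) => [e|ne]; last by case: nj.
  by rewrite -e IH // j0 /=; lia.
have cardG : #|G| = (p ^ (\sum_(1 <= j < h) n j))%N.
  have := Gbc (h - 1)%N (leqnn _).
  rewrite (_ : h - (h - 1) = 1)%N; last lia.
  by rewrite /Gb (_ : (1 < h)%N); [rewrite rb1 | lia].
move: Hroot; rewrite /root /addpol !hornerE horner_sum subr_eq0 => /eqP eD.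
rewrite (eq_bigr (fun j : 'I_(n i) => iota (a i j) * fb i ^+ (p ^ j))) in eD; last by move=> j _; rewrite !hornerE.
have bpos : (0 < b i)%N by have := bmono 1%N i (leqnn 1) i2 ih; lia.
set c := (p ^ (\sum_(i.+1 <= j < h) n j) * b i)%N in vfb.
have cpos : (0 < c)%N by rewrite /c muln_gt0 expn_gt0 bpos andbT; lia.
have vfbX : forall m, v (fb i ^+ m) = - ((c * m)%N%:Z).
  by move=> m; rewrite (@vX_lem _ _ hmul) // vfb PoszM mulNr.
have vD : v (D i) = - ((c * p ^ n i)%N%:Z).
  rewrite -eD -vfbX.
  have -> : \sum_(j < n i) iota (a i j) * fb i ^+ (p ^ j) =
     \sum_(y <- [seq iota (a i j) * fb i ^+ (p ^ j) | j : 'I_(n i) <- index_enum 'I_(n i)]) y.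
    by rewrite big_map.
  have fX : fb i ^+ (p ^ n i) != 0 by rewrite expf_neq0.
  set L := [seq _ | j : 'I_(n i) <- _].
  suff hs : forall y, y \in L -> y != 0 -> v (fb i ^+ (p ^ n i)) < v y.
    by have [_ ->] := @sum_dom _ _ hmul hmin L _ fX hs.
  move=> y /mapP[j _ ->] yn.
  have aj : a i j != 0 by apply: contraNneq yn => ->; rewrite rmorph0 mul0r.
  rewrite hmul ?expf_neq0 ?fmorph_eq0 // hk // add0r !vfbX ltrN2 ltz_nat ltn_pmul2l //.
  by rewrite ltn_exp2l ?ltn_ord //; lia.
have xnz : x != 0.
  have := trans 'X (negbT (polyX_eq0 _)); by rewrite map_polyX hornerX.
have [ainz _ _] := Hterm _ Hin.
have prodP := @prod_lem _ _ hmul (index_iota 1 i) (fun j => fb j ^+ nth 0%N nu j).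
have [pnz pv] : \prod_(1 <= j < i) fb j ^+ nth 0%N nu j != 0 /\
     v (\prod_(1 <= j < i) fb j ^+ nth 0%N nu j) = \sum_(1 <= j < i) v (fb j ^+ nth 0%N nu j).
  apply: prodP => j; rewrite mem_index_iota => hj.
  have hj' : (1 <= j <= h - 1)%N by apply/andP; split; lia.
  have [fj _ _ _ _] := fbP j hj'.
  by rewrite expf_neq0.
have mnz : monom iota x fb i (ai, nu) != 0.
  by rewrite /monom /= !mulf_neq0 ?expf_neq0 ?fmorph_eq0.
have uT : uniq (terms i) by apply: map_uniq Huniq.
have vDm : v (D i) = v (monom iota x fb i (ai, nu)).
  rewrite HD (bigD1_seq _ Hin uT) /=.
  have -> : \sum_(tm <- terms i | tm != (ai, nu)) monom iota x fb i tm =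
     \sum_(y <- [seq monom iota x fb i tm | tm <- terms i & tm != (ai, nu)]) y.
    by rewrite big_map big_filter.
  set L := [seq _ | tm <- _].
  suff hs : forall y, y \in L -> y != 0 -> v (monom iota x fb i (ai, nu)) < v y.
    by have [_ ->] := @sum_dom _ _ hmul hmin L _ mnz hs.
  move=> y /mapP[tm]; rewrite mem_filter => /andP[ne tin] -> _.
  rewrite lt_neqAle Hmin // andbT eq_sym Hdist //.
  apply: contra ne => /eqP e; apply/eqP; exact: (@uniq_map_eq _ _ _ _ _ _ Huniq tin Hin e).
have vm : v (monom iota x fb i (ai, nu)) =
   - Posz (#|G| * nth 0%N nu 0 + \sum_(1 <= j < i) p ^ (\sum_(j.+1 <= l < h) n l) * b j * nth 0%N nu j)%N.
  rewrite /monom /= hmul ?mulf_neq0 ?expf_neq0 ?fmorph_eq0 // hmul ?expf_neq0 ?fmorph_eq0 // hk // add0r.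
  rewrite (@vX_lem _ _ hmul) // vx pv.
  rewrite (eq_big_seq (fun j => - Posz (p ^ (\sum_(j.+1 <= l < h) n l) * b j * nth 0%N nu j)%N)).
    by rewrite sumrN -Posz_sum mulNr -PoszM PoszD opprD.
  move=> j; rewrite mem_index_iota => hj.
  have hj' : (1 <= j <= h - 1)%N by apply/andP; split; lia.
  have [fj _ _ _ vj] := fbP j hj'.
  by rewrite (@vX_lem _ _ hmul) // vj mulNr -PoszM.
have E : (c * p ^ n i = #|G| * nth 0%N nu 0 + \sum_(1 <= j < i) p ^ (\sum_(j.+1 <= l < h) n l) * b j * nth 0%N nu j)%N.
  by apply/eqP; rewrite -eqz_nat; apply/eqP; apply: oppr_inj; rewrite -vD vDm vm.
set T := (\sum_(i <= j < h) n j)%N.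
have p0 : (0 < p)%N by apply: leq_trans p5.
have pT : (0 < p ^ T)%N by rewrite expn_gt0 p0.
apply/eqP; rewrite -(eqn_pmul2l pT); apply/eqP.
have e1 : (p ^ T * b i = c * p ^ n i)%N.
  rewrite /c /T (big_ltn (m:=i)); last by move: ih i2; clear; lia.
  rewrite expnD; ring.
rewrite e1 E mulnDr big_distrr /=.
congr (_ + _)%N.
  have hih : (i <= h)%N by apply: leq_trans ih (leq_subr _ _).
  rewrite cardG /T (big_cat_nat _ (n:=i)) //=; last by move: i2; clear; lia.
  rewrite expnD; ring.
apply: eq_big_seq => j; rewrite mem_index_iota => hj.
have hj1 : (j.+1 <= i)%N by case/andP: hj.
have hih : (i <= h)%N by apply: leq_trans ih (leq_subr _ _).
rewrite (big_cat_nat _ (n:=i)) //= -/T.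
rewrite expnD; ring.
Qed.
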